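(* Let $f$ be a real-valued function on pairs $(\rho,\sigma)$ with $\sigma\in\mathcal F$ and $\rho$ a density matrix on the same Hilbert space as $\sigma$, which is locally monotonic with respect to $\mathcal C_{\mathcal F}$. Then $f(\rho,\sigma)\ge f(C[\rho],C[\sigma])$ for every $C\in\mathcal C_{\mathcal F}$ (with $\sigma\in\mathcal F$ in its domain), and the same holds for $f'(\rho,\sigma):=f(\rho,\sigma)-f(\sigma,\sigma)$. Moreover, $f(\sigma,\sigma)$ is independent of $\sigma\in\mathcal F$.
   Context: $\mathcal F$ is the set of all full-rank density matrices on finite-dimensional Hilbert spaces, and $\mathcal C_{\mathcal F}$ is the set of quantum channels (between possibly different finite-dimensional Hilbert spaces) mapping full-rank states to full-rank states. $f$ is locally monotonic with respect to $\mathcal C_{\mathcal F}$ if whenever $C\in\mathcal C_{\mathcal F}$ acts on $\mathcal H_1\otimes\mathcal H_2$ with output space $\mathcal H'_1\otimes\mathcal H'_2$, $\sigma_1\otimes\sigma_2\in\mathcal F$ and $C[\sigma_1\otimes\sigma_2]=\sigma'_1\otimes\sigma'_2\in\mathcal F$, then for all density matrices $\rho_i$ on $\mathcal H_i$: $f(\rho_1,\sigma_1)+f(\rho_2,\sigma_2)\ge f(\rho'_1,\sigma'_1)+f(\rho'_2,\sigma'_2)$, with $\rho'_1=\mathrm{Tr}_2[C(\rho_1\otimes\rho_2)]$, $\rho'_2=\mathrm{Tr}_1[C(\rho_1\otimes\rho_2)]$. *)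

(* Defs.v *)
From HB Require Import structures.
From mathcomp Require Import all_boot all_order all_algebra.
From mathcomp Require Import complex mxtens.
From mathcomp Require Import reals.
Set Implicit Arguments. Unset Strict Implicit. Unset Printing Implicit Defensive.
Import Order.TTheory GRing.Theory Num.Theory.
Local Open Scope ring_scope.
Local Open Scope complex_scope.

Section Quantum.
Variable R : realType.
Local Notation C := (R[i]).

Definition adj {m n} (A : 'M[C]_(m, n)) : 'M[C]_(n, m) := (map_mx conjc A)^T.

Definition hermitian {n} (A : 'M[C]_n) : Prop := adj A = A.

Definition psd {n} (A : 'M[C]_n) : Prop :=
  hermitian A /\ forall v : 'cV[C]_n, 0 <= (adj v *m A *m v) 0 0.

Definition pd {n} (A : 'M[C]_n) : Prop :=
  hermitian A /\ forall v : 'cV[C]_n, v != 0 -> 0 < (adj v *m A *m v) 0 0.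

(* density matrices (states) and full-rank states (the set F) *)
Definition density {n} (A : 'M[C]_n) : Prop := psd A /\ \tr A = 1.
Definition fullrank {n} (A : 'M[C]_n) : Prop := pd A /\ \tr A = 1.

Definition blk {k n} (X : 'M[C]_(k * n)) (i j : 'I_k) : 'M[C]_n :=
  \matrix_(a, b) X (mxtens_index (i, a)) (mxtens_index (j, b)).

(* id_k (x) Phi *)
Definition ampl {n m} (k : nat) (Phi : 'M[C]_n -> 'M[C]_m)
  (X : 'M[C]_(k * n)) : 'M[C]_(k * m) :=
  \sum_(i < k) \sum_(j < k) tensmx (delta_mx i j : 'M[C]_k) (Phi (blk X i j)).

Definition channel {n m} (Phi : 'M[C]_n -> 'M[C]_m) : Prop :=
  [/\ forall (a : C) (X Y : 'M[C]_n), Phi (a *: X + Y) = a *: Phi X + Phi Y,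
      forall (k : nat) (X : 'M[C]_(k * n)), psd X -> psd (@ampl n m k Phi X)
    & forall X : 'M[C]_n, \tr (Phi X) = \tr X].

Definition inCF {n m} (Phi : 'M[C]_n -> 'M[C]_m) : Prop :=
  channel Phi /\ forall s : 'M[C]_n, fullrank s -> fullrank (Phi s).

Definition ptr2 {n1 n2} (X : 'M[C]_(n1 * n2)) : 'M[C]_n1 :=
  \matrix_(a, b) \sum_(c < n2) X (mxtens_index (a, c)) (mxtens_index (b, c)).
Definition ptr1 {n1 n2} (X : 'M[C]_(n1 * n2)) : 'M[C]_n2 :=
  \matrix_(a, b) \sum_(c < n1) X (mxtens_index (c, a)) (mxtens_index (c, b)).

Definition locally_monotonic (f : forall n, 'M[C]_n -> 'M[C]_n -> R) : Prop :=
  forall (n1 n2 m1 m2 : nat) (Ch : 'M[C]_(n1 * n2) -> 'M[C]_(m1 * m2))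
    (s1 : 'M[C]_n1) (s2 : 'M[C]_n2) (s1' : 'M[C]_m1) (s2' : 'M[C]_m2),
    inCF Ch -> fullrank s1 -> fullrank s2 -> fullrank s1' -> fullrank s2' ->
    Ch (tensmx s1 s2) = tensmx s1' s2' ->
    forall (r1 : 'M[C]_n1) (r2 : 'M[C]_n2), density r1 -> density r2 ->
      f m1 (ptr2 (Ch (tensmx r1 r2))) s1' + f m2 (ptr1 (Ch (tensmx r1 r2))) s2'
      <= f n1 r1 s1 + f n2 r2 s2.

End Quantum.

(* Main.v *)
Require Import Defs.
From HB Require Import structures.
From mathcomp Require Import all_boot all_order all_algebra.
From mathcomp Require Import complex mxtens.
From mathcomp Require Import reals.
From mathcomp Require spectral sesquilinear.
From Stdlib Require Import FunctionalExtensionality.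
From mathcomp Require Import ring.
Import Order.TTheory GRing.Theory Num.Theory.
Set Implicit Arguments. Unset Strict Implicit. Unset Printing Implicit Defensive.
Local Open Scope ring_scope.
Local Open Scope complex_scope.
Section S.
Variable R : realType.
Local Notation C := (R[i]).
Lemma conjE (x : C) : Num.conj x = conjc x.
Proof.
have [->|x0] := eqVneq x 0; first by rewrite rmorph0 conjc0.
apply: (mulfI x0). by rewrite -normCK sqr_normc.
Qed.

Lemma conjcM (x y : C) : conjc (x * y) = conjc x * conjc y.
Proof. exact: rmorphM. Qed.

Lemma conjc_sum n (F : 'I_n -> C) : conjc (\sum_i F i) = \sum_i conjc (F i).
Proof. exact: raddf_sum. Qed.

Lemma adjE m n (A : 'M[C]_(m, n)) i j : adj A i j = conjc (A j i).
Proof. by rewrite !mxE. Qed.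

Lemma adjK m n (A : 'M[C]_(m, n)) : adj (adj A) = A.
Proof. by apply/matrixP => i j; rewrite !adjE conjcK. Qed.

Lemma adj_mul m n p (A : 'M[C]_(m, n)) (B : 'M[C]_(n, p)) : adj (A *m B) = adj B *m adj A.
Proof. by rewrite /adj map_mxM trmx_mul. Qed.

Lemma qfE n (A : 'M[C]_n) (u : 'cV[C]_n) :
  (adj u *m A *m u) 0 0 = \sum_a \sum_b conjc (u a 0) * A a b * u b 0.
Proof.
rewrite mxE; under eq_bigr do rewrite mxE big_distrl /=.
rewrite exchange_big /=; apply: eq_bigr => a _; apply: eq_bigr => b _.
by rewrite adjE.
Qed.

Lemma sum_tens p q (F : 'I_(p * q) -> C) :
  \sum_x F x = \sum_(i < p) \sum_(a < q) F (mxtens_index (i, a)).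
Proof.
rewrite pair_big /=.
rewrite (reindex (@mxtens_index p q)) /=; last first.
  by exists (@mxtens_unindex p q) => x _; [rewrite mxtens_indexK | rewrite mxtens_unindexK].
by apply: eq_bigr => -[i a].
Qed.

Lemma tstarE n (A : 'M[C]_n) : map_mx Num.conj (A^T) = adj A.
Proof. by apply/matrixP => i j; rewrite !mxE conjE. Qed.

Lemma tensmx1 p (A : 'M[C]_p) :
  tensmx A (1%:M : 'M[C]_1) = castmx (esym (muln1 p), esym (muln1 p)) A.
Proof.
apply/matrixP => x y; case: (mxtens_indexP x) => i a; case: (mxtens_indexP y) => j b.
rewrite tensmxE castmxE !ord1 mxE /= mulr1.
by congr (A _ _); apply: val_inj => /=; rewrite muln1 addn0.
Qed.

Lemma ptr2_tens1 p (A : 'M[C]_p) : ptr2 (tensmx A (1%:M : 'M[C]_1)) = A.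
Proof.
by apply/matrixP => a b; rewrite mxE big_ord1 tensmxE mxE /= mulr1.
Qed.

Lemma ptr1_tens1 p (A : 'M[C]_p) : ptr1 (tensmx A (1%:M : 'M[C]_1)) = (\tr A)%:M.
Proof.
apply/matrixP => a b; rewrite !ord1 !mxE /= mulr1n.
by apply: eq_bigr => c _; rewrite tensmxE mxE /= mulr1.
Qed.

Lemma fullrank_density n (A : 'M[C]_n) : fullrank A -> density A.
Proof.
case=> -[hA pA] tA; split=> //; split=> // v.
have [->|v0] := eqVneq v 0; last by apply/ltW/pA.
by rewrite mulmx0 mxE.
Qed.

Lemma fullrank1 : fullrank (1%:M : 'M[C]_1).
Proof.
split; last by rewrite mxtrace1.
split.
  by red; rewrite /adj map_mx1 trmx1.
move=> v v0; rewrite mulmx1 mxE big_ord1 adjE -conjE mulrC mul_conjC_gt0.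
apply: contra v0 => /eqP h; apply/eqP/matrixP => i j; rewrite !ord1 h mxE //.
Qed.

Lemma inCF_cast n n' m m' (en : n' = n) (em : m = m') (Ch : 'M[C]_n -> 'M[C]_m) :
  inCF Ch -> inCF (fun X : 'M[C]_n' => castmx (em, em) (Ch (castmx (en, en) X))).
Proof.
case: n / en in Ch *; case: m' / em.
suff -> : (fun X : 'M[C]_n' => castmx (erefl m, erefl m) (Ch (castmx (erefl n', erefl n') X))) = Ch by [].
by apply: functional_extensionality => X; rewrite !castmx_id.
Qed.

Lemma mono1 (f : forall n : nat, 'M[C]_n -> 'M[C]_n -> R) :
  locally_monotonic f ->
  forall (n m : nat) (Ch : 'M[C]_n -> 'M[C]_m) (rho sigma : 'M[C]_n),
  inCF Ch -> density rho -> fullrank sigma -> f m (Ch rho) (Ch sigma) <= f n rho sigma.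
Proof.
move=> lm n m Ch rho sigma hCh hr hs.
have hCs : fullrank (Ch sigma) by case: hCh => _; apply.
have f1 : fullrank (1%:M : 'M[C]_1) := fullrank1.
pose Ch' := fun X : 'M[C]_(n * 1) =>
  castmx (esym (muln1 m), esym (muln1 m)) (Ch (castmx (muln1 n, muln1 n) X)).
have CF' : inCF Ch' := @inCF_cast n (n * 1) m (m * 1) (muln1 n) (esym (muln1 m)) Ch hCh.
have eCh X : Ch' (tensmx X 1%:M) = tensmx (Ch X) 1%:M.
  by rewrite /Ch' !tensmx1 castmxKV.
have H1 := @lm n 1%N m 1%N Ch' sigma 1%:M (Ch sigma) 1%:M CF' hs.
have H2 := H1 f1 hCs.
have H3 := H2 f1.
have H4 := H3 (eCh sigma) rho.
have H5 := H4 1%:M hr (fullrank_density f1).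
move: H5.
case: hCh => -[_ _ htr] _.
rewrite eCh ptr2_tens1 ptr1_tens1 htr hr.2 lerD2r //.
Qed.

Lemma hermE n (A : 'M[C]_n) : Defs.hermitian A -> forall i j, A i j = conjc (A j i).
Proof. by move=> hA i j; rewrite -{1}hA adjE. Qed.

Lemma qf_tens p q (Z : 'M[C]_(p * q)) (w : 'cV[C]_(p * q)) :
  \sum_x \sum_y conjc (w x 0) * Z x y * w y 0 =
  \sum_i \sum_a \sum_j \sum_b conjc (w (mxtens_index (i, a)) 0) *
     Z (mxtens_index (i, a)) (mxtens_index (j, b)) * w (mxtens_index (j, b)) 0.
Proof.
rewrite sum_tens; apply: eq_bigr => i _; apply: eq_bigr => a _.
by rewrite sum_tens.
Qed.

Lemma big_collapse n (c : 'I_n) (F : 'I_n -> C) :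
  (forall a, a != c -> F a = 0) -> \sum_a F a = F c.
Proof. by move=> h; rewrite (bigD1 c) //= big1 ?addr0. Qed.

Lemma psd_ptr2 k n (X : 'M[C]_(k * n)) : psd X -> psd (ptr2 X).
Proof.
case=> hX pX; split.
  apply/matrixP => a b; rewrite adjE !mxE rmorph_sum; apply: eq_bigr => c _.
  by rewrite [in RHS](hermE hX).
move=> u; rewrite qfE.
pose w (c : 'I_n) : 'cV[C]_(k * n) :=
  \col_x (if (mxtens_unindex x).2 == c then u (mxtens_unindex x).1 0 else 0).
have ew c : (adj (w c) *m X *m w c) 0 0 =
    \sum_i \sum_j conjc (u i 0) * X (mxtens_index (i, c)) (mxtens_index (j, c)) * u j 0.
  rewrite qfE qf_tens exchange_big /= (@big_collapse _ c) => [|a ne]; last first.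
    by apply: big1 => i _; apply: big1 => j _; apply: big1 => b _;
      rewrite mxE mxtens_indexK /= (negbTE ne) raddf0 !mul0r.
  apply: eq_bigr => i _; apply: eq_bigr => j _.
  rewrite (@big_collapse _ c) => [|b ne]; last first.
    by rewrite [w c (mxtens_index (j, b)) 0]mxE mxtens_indexK /= (negbTE ne) !mulr0.
  by rewrite !mxE !mxtens_indexK /= eqxx.
have -> : \sum_a \sum_b conjc (u a 0) * ptr2 X a b * u b 0 =
    \sum_c (adj (w c) *m X *m w c) 0 0.
  under [RHS]eq_bigr => c _ do rewrite ew.
  rewrite [RHS]exchange_big /=; apply: eq_bigr => i _; rewrite [RHS]exchange_big /=; apply: eq_bigr => j _.
  by rewrite mxE mulr_sumr mulr_suml; apply: eq_bigr => c _.
by apply: sumr_ge0 => c _; apply: pX.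
Qed.

Lemma psd_diag_conj p n (U : 'M[C]_(p, n)) (A : 'M[C]_n) :
  psd A -> forall k, 0 <= (U *m A *m adj U) k k.
Proof.
case=> _ pA k; have := pA (adj (row k U)); rewrite adjK -row_mul.
suff -> : (row k (U *m A) *m adj (row k U)) 0 0 = (U *m A *m adj U) k k by [].
by rewrite !mxE; apply: eq_bigr => l _; rewrite !mxE.
Qed.

Lemma psd_tens k m (Y : 'M[C]_k) (T : 'M[C]_m) : psd Y -> psd T -> psd (tensmx Y T).
Proof.
move=> hY0 hT0; have [hY pY] := hY0; have [hT pT] := hT0; split.
  apply/matrixP => x y; case: (mxtens_indexP x) => i a; case: (mxtens_indexP y) => j b.
  by rewrite adjE !tensmxE conjcM [Y i j](hermE hY) [T a b](hermE hT).
move=> v; rewrite qfE qf_tens.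
have nT : T \is spectral.normalmx.
  by apply/spectral.normalmxP; rewrite tstarE hT.
pose P := spectral.spectralmx T; pose d := spectral.spectral_diag T.
have eT0 : T = invmx P *m diag_mx d *m P by apply/spectral.orthomx_spectralP.
have uP : P \is spectral.unitarymx := spectral.spectral_unitarymx T.
have iP : invmx P = adj P by rewrite spectral.invmx_unitary // tstarE.
have PP : P *m adj P = 1%:M by rewrite -tstarE; apply/spectral.unitarymxP.
have dge0 l : 0 <= d 0 l.
  have := psd_diag_conj P hT0 l.
  rewrite [in X in P *m X]eT0 iP !mulmxA PP mul1mx -mulmxA PP mulmx1.
  by rewrite mxE eqxx mulr1n.
have eT a b : T a b = \sum_l conjc (P l a) * d 0 l * P l b.
  rewrite {1}eT0 iP mul_mx_diag mxE; apply: eq_bigr => l _; by rewrite !mxE.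
pose W l : 'cV[C]_k := \col_i (\sum_b P l b * v (mxtens_index (i, b)) 0).
have -> : \sum_i \sum_a \sum_j \sum_b
     conjc (v (mxtens_index (i, a)) 0) * (Y *t T) (mxtens_index (i, a)) (mxtens_index (j, b)) *
     v (mxtens_index (j, b)) 0 =
   \sum_l d 0 l * (adj (W l) *m Y *m W l) 0 0.
  have -> : \sum_i \sum_a \sum_j \sum_b
     conjc (v (mxtens_index (i, a)) 0) * (Y *t T) (mxtens_index (i, a)) (mxtens_index (j, b)) *
     v (mxtens_index (j, b)) 0 =
    \sum_i \sum_a \sum_j \sum_b \sum_l
     conjc (v (mxtens_index (i, a)) 0) * (Y i j * (conjc (P l a) * d 0 l * P l b)) *
     v (mxtens_index (j, b)) 0.
    apply: eq_bigr => i _; apply: eq_bigr => a _; apply: eq_bigr => j _; apply: eq_bigr => b _.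
    by rewrite tensmxE eT !mulr_sumr mulr_suml.
  have -> : \sum_l d 0 l * (adj (W l) *m Y *m W l) 0 0 =
    \sum_l \sum_i \sum_j \sum_a \sum_b
      d 0 l * (conjc (P l a * v (mxtens_index (i, a)) 0) * Y i j * (P l b * v (mxtens_index (j, b)) 0)).
    apply: eq_bigr => l _; rewrite qfE mulr_sumr; apply: eq_bigr => i _.
    rewrite mulr_sumr; apply: eq_bigr => j _.
    rewrite !mxE conjc_sum !mulr_suml mulr_sumr; apply: eq_bigr => a _.
    rewrite mulr_sumr mulr_sumr; apply: eq_bigr => b _.
    by rewrite mulrA.
  rewrite [RHS]exchange_big /=; apply: eq_bigr => i _.
  rewrite [LHS]exchange_big [RHS]exchange_big /=; apply: eq_bigr => j _.
  rewrite [RHS]exchange_big /=; apply: eq_bigr => a _.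
  rewrite [RHS]exchange_big /=; apply: eq_bigr => b _.
  apply: eq_bigr => l _; rewrite conjcM; ring.
by apply: sumr_ge0 => l _; apply: mulr_ge0.
Qed.

Definition repl n m (T : 'M[C]_m) : 'M[C]_n -> 'M[C]_m := fun X => \tr X *: T.

Lemma ampl_repl k n m (T : 'M[C]_m) (X : 'M[C]_(k * n)) :
  @ampl _ n m k (repl (n:=n) T) X = tensmx (ptr2 X) T.
Proof.
apply/matrixP => x y; case: (mxtens_indexP x) => a c; case: (mxtens_indexP y) => b e.
rewrite tensmxE /ampl summxE.
under eq_bigr do rewrite summxE.
rewrite (@big_collapse _ a) => [|i ne]; last first.
  apply: big1 => j _; rewrite tensmxE mxE.
  by rewrite eq_sym (negbTE ne) /= mul0r.
rewrite (@big_collapse _ b) => [|j ne]; last first.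
  by rewrite tensmxE mxE eqxx eq_sym (negbTE ne) /= mul0r.
rewrite tensmxE !mxE !eqxx /= mul1r; congr (_ * _).
by rewrite /mxtrace; apply: eq_bigr => l _; rewrite mxE.
Qed.

Lemma inCF_repl n m (T : 'M[C]_m) : fullrank T -> inCF (repl (n:=n) T).
Proof.
move=> hT; split; last first.
  by move=> s hs; rewrite /repl hs.2 scale1r.
split.
- by move=> a X Y; rewrite /repl mxtraceD mxtraceZ scalerDl scalerA.
- move=> k X hX; rewrite ampl_repl; apply: psd_tens; first exact: psd_ptr2.
  exact: (fullrank_density hT).1.
- by move=> X; rewrite /repl mxtraceZ hT.2 mulr1.
Qed.
End S.

Unset Implicit Arguments.
Theorem lemma39 (R : realType) (f : forall n : nat, 'M[R[i]]_n -> 'M[R[i]]_n -> R) :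
  locally_monotonic f ->
  [/\ (forall (n m : nat) (Ch : 'M[R[i]]_n -> 'M[R[i]]_m)
         (rho sigma : 'M[R[i]]_n),
         inCF Ch -> density rho -> fullrank sigma ->
         f m (Ch rho) (Ch sigma) <= f n rho sigma),
      (forall (n m : nat) (Ch : 'M[R[i]]_n -> 'M[R[i]]_m)
         (rho sigma : 'M[R[i]]_n),
         inCF Ch -> density rho -> fullrank sigma ->
         f m (Ch rho) (Ch sigma) - f m (Ch sigma) (Ch sigma)
         <= f n rho sigma - f n sigma sigma)
    & (forall (n m : nat) (sigma : 'M[R[i]]_n) (tau : 'M[R[i]]_m),
         fullrank sigma -> fullrank tau -> f n sigma sigma = f m tau tau)].
Proof.
move=> lm.
have P1 := mono1 lm.
have P3 : forall (n m : nat) (sigma : 'M[R[i]]_n) (tau : 'M[R[i]]_m),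
    fullrank sigma -> fullrank tau -> f n sigma sigma = f m tau tau.
  move=> n m s t hs ht; apply/eqP; rewrite eq_le; apply/andP; split.
    have := P1 m n (repl (n:=m) s) t t (inCF_repl m hs) (fullrank_density ht) ht.
    by rewrite /repl ht.2 scale1r.
  have := P1 n m (repl (n:=n) t) s s (inCF_repl n ht) (fullrank_density hs) hs.
  by rewrite /repl hs.2 scale1r.
split=> //.
move=> n m Ch rho sigma hCh hr hs.
have hCs : fullrank (Ch sigma) by case: hCh => _; apply.
rewrite (P3 m n (Ch sigma) sigma hCs hs) lerD2r.
exact: P1.
Qed.
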